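(* Let $A \subset \mathbb{R}$ be finite, let $K>0$, and suppose that $E^{\times}(A) \geq \frac{|A|^3}{K}$. Then there is a subset $A'\subseteq A$ and a number $\Delta \gg |A|/K$ such that $$|A'|\gtrsim\frac{|A|^2}{K\Delta}\qquad\text{and}\qquad d_*(A')\lesssim \frac{K|A'|^2}{|A|\Delta}.$$
   Context: $E^{\times}(A)$ is the number of solutions of $a_1/b_1=a_2/b_2$ with $a_i,b_i\in A$. For finite $A\subset\mathbb{R}$, define $$d_*(A)=\min_{t>0}\ \min_{Q,R} \frac{|Q|^2|R|^2}{|A|t^3},$$ where the inner minimum is over nonempty finite sets $Q,R\subset\mathbb{R}\setminus\{0\}$ with $\max\{|Q|,|R|\}\ge |A|$ such that $|Q\cap aR^{-1}|\ge t$ for every $a\in A$ (here $aR^{-1}=\{a/r: r\in R\}$). Notation: $X\ll Y$ / $Y\gg X$ means $X\le cY$ for an absolute constant $c>0$; $X\gtrsim Y$ (equivalently $Y\lesssim X$) means there is an absolute constant $c>0$ with $X\gg Y/(\log X)^c$, i.e. constant and logarithmic factors are suppressed. Logarithms are base 2. *)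

(* Defs.v *)
From HB Require Import structures.
From mathcomp Require Import all_boot all_order all_algebra.
From mathcomp Require Import finmap.
From mathcomp Require Import all_classical all_reals all_analysis.
Set Implicit Arguments. Unset Strict Implicit. Unset Printing Implicit Defensive.
Import Order.TTheory GRing.Theory Num.Theory.
Local Open Scope ring_scope.
Local Open Scope fset_scope.

Definition mult_energy (R : realType) (A : {fset R}) : nat :=
  (\sum_(a1 <- A) \sum_(b1 <- A) \sum_(a2 <- A) \sum_(b2 <- A)
     (a1 / b1 == a2 / b2 : nat))%N.

Definition dil_inv (R : realType) (a : R) (S : {fset R}) : {fset R} :=
  [fset a / r | r in S].

Definition dstar_admissible (R : realType) (A : {fset R}) (t : R)
  (Q S : {fset R}) : Prop :=
  [/\ 0 < t, Q != fset0 /\ S != fset0, (0 : R) \notin Q /\ (0 : R) \notin S,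
      (#|` A| <= maxn #|` Q| #|` S|)%N &
      forall a, a \in A -> t <= (#|` (Q `&` dil_inv a S)|)%:R].

Definition dstar_value (R : realType) (A : {fset R}) (t : R) (Q S : {fset R}) : R :=
  ((#|` Q|)%:R ^+ 2 * (#|` S|)%:R ^+ 2) / ((#|` A|)%:R * t ^+ 3).

(* d_*(A): the minimum (= infimum; it is attained whenever A is nonempty and
   0 \notin A) of the values over admissible data. *)
Definition dstar (R : realType) (A : {fset R}) : R :=
  inf [set v : R | exists t Q S, dstar_admissible A t Q S /\ v = dstar_value A t Q S].

Definition log2 (R : realType) (x : R) : R := ln x / ln 2.

(* Main.v *)
Require Import Defs.
From HB Require Import structures.
From mathcomp Require Import all_boot all_order all_algebra.
From mathcomp Require Import finmap.
From mathcomp Require Import all_classical all_reals all_analysis.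
From mathcomp Require Import zify ring lra.
Import Order.TTheory GRing.Theory Num.Theory.
Local Open Scope ring_scope.
Local Open Scope fset_scope.

Lemma sum_ind_min (n M : nat) :
  (\sum_(1 <= k < M.+1) (k <= n : nat))%N = minn n M.
Proof.
elim: M => [|M IH]; first by rewrite big_geq // minn0.
rewrite big_nat_recr //= IH.
case: (leqP M.+1 n) => h /=; lia.
Qed.

Definition rr (R : realType) (A : {fset R}) (x : R) : nat :=
  (\sum_(c <- A) \sum_(d <- A) (c / d == x : nat))%N.
Arguments rr {R}.

Lemma energyE {R : realType} (A : {fset R}) :
  mult_energy A = (\sum_(a <- A) \sum_(b <- A) rr A (a / b))%N.
Proof.
rewrite /mult_energy /rr; apply eq_bigr => a _; apply eq_bigr => b _.
apply eq_bigr => c _; apply eq_bigr => d _; by rewrite eq_sym.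
Qed.

Lemma sum_const_card {R : realType} (A : {fset R}) (m : nat) :
  (\sum_(a <- A) m)%N = (#|` A| * m)%N.
Proof. by rewrite big_const_seq count_predT iter_addn_0 mulnC. Qed.

Lemma rr_le {R : realType} (A : {fset R}) x : (rr A x <= #|` A| * #|` A|)%N.
Proof.
rewrite /rr -sum_const_card; apply: leq_sum => c _.
rewrite -[X in (_ <= X)%N]muln1 -sum_const_card; apply: leq_sum => d _.
exact: leq_b1.
Qed.

Definition WW (R : realType) (A : {fset R}) (D : nat) : nat :=
  (\sum_(a <- A) \sum_(b <- A) (D <= rr A (a / b) : nat))%N.
Arguments WW {R}.

Lemma energy_layer {R : realType} (A : {fset R}) :
  mult_energy A = (\sum_(1 <= D < (#|` A| * #|` A|).+1) WW A D)%N.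
Proof.
rewrite energyE /WW.
under eq_bigr => a _ do under eq_bigr => b _ do
  rewrite -(minn_idPl (rr_le A (a / b))) -sum_ind_min.
under eq_bigr => a _ do rewrite exchange_big /=.
by rewrite exchange_big.
Qed.

Definition PP (R : realType) (A : {fset R}) (D : nat) : {fset R} :=
  [fset x in [seq a / b | a <- A, b <- A] | (D <= rr A x)%N].
Arguments PP {R}.

Lemma memPP {R : realType} (A : {fset R}) D a b : a \in A -> b \in A ->
  (a / b \in PP A D) = (D <= rr A (a / b))%N.
Proof.
move=> ha hb; rewrite /PP !inE; rewrite [X in X && _](_ : _ = true) //.
exact: (allpairs_f (fun a b => a / b) ha hb).
Qed.

Lemma PP_nz {R : realType} (A : {fset R}) D x : (0:R) \notin A -> x \in PP A D -> x != 0.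
Proof.
move=> h0; rewrite /PP !inE => /andP[/allpairsP [[a b] /= [ha hb ->]] _].
rewrite mulf_neq0 // ?invr_eq0; apply/negP => /eqP h; [move: ha|move: hb]; rewrite h;
  by apply/negP.
Qed.

Lemma sum_eq_mem {R : realType} (P : {fset R}) y :
  (\sum_(x <- P) (y == x : nat))%N = (y \in P).
Proof.
have -> : (\sum_(x <- P) (y == x : nat))%N = count (pred1 y) P.
  rewrite -(sum1_count P (pred1 y)) [RHS]big_mkcond /=; apply eq_bigr => x _.
  by rewrite eq_sym; case: eqP.
by rewrite count_uniq_mem // fset_uniq.
Qed.

Lemma WW_eq {R : realType} (A : {fset R}) D :
  WW A D = (\sum_(x <- PP A D) rr A x)%N.
Proof.
rewrite /WW /rr.
have -> : (\sum_(a <- A) \sum_(b <- A) (D <= rr A (a / b) : nat))%N =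
  (\sum_(a <- A) \sum_(b <- A) \sum_(x <- PP A D) (a / b == x : nat))%N.
  apply: eq_big_seq => a ha; apply: eq_big_seq => b hb.
  by rewrite sum_eq_mem memPP.
under eq_bigr => a _ do rewrite exchange_big /=.
by rewrite exchange_big.
Qed.

Lemma WW_ge {R : realType} (A : {fset R}) D : (D * #|` PP A D| <= WW A D)%N.
Proof.
rewrite WW_eq card_fset_sum1 big_distrr /= big_seq_cond [X in (_ <= X)%N]big_seq_cond.
apply: leq_sum => x /andP[hx _].
rewrite muln1; move: hx; rewrite /PP !inE => /andP[_ ->] //.
Qed.

Definition deg (R : realType) (A : {fset R}) (D : nat) (a : R) : nat :=
  (\sum_(b <- A) (D <= rr A (a / b) : nat))%N.
Arguments deg {R}.

Definition AA (R : realType) (A : {fset R}) (D d : nat) : {fset R} :=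
  [fset a in A | (d <= deg A D a)%N].
Arguments AA {R}.

Lemma deg_le {R : realType} (A : {fset R}) D a : (deg A D a <= #|` A|)%N.
Proof.
rewrite /deg card_fset_sum1; apply: leq_sum => b _; exact: leq_b1.
Qed.

Lemma card_AA {R : realType} (A : {fset R}) D d :
  #|` AA A D d| = (\sum_(a <- A) (d <= deg A D a : nat))%N.
Proof.
rewrite card_fset_sum1 /AA -big_fset_condE big_mkcond /=.
by apply eq_bigr => a _; case: (d <= deg A D a)%N.
Qed.

Lemma WW_layer {R : realType} (A : {fset R}) D :
  WW A D = (\sum_(1 <= d < #|` A|.+1) #|` AA A D d|)%N.
Proof.
under [RHS]eq_bigr => d _ do rewrite card_AA.
rewrite exchange_big /=; apply eq_bigr => a _.
by rewrite sum_ind_min (minn_idPl (deg_le A D a)).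
Qed.

Lemma deg_le_cap {R : realType} (A : {fset R}) D a : (0:R) \notin A -> a \in A ->
  (deg A D a <= #|` (A `&` dil_inv a (PP A D))|)%N.
Proof.
move=> h0 ha.
have -> : deg A D a = #|` [fset b in A | a / b \in PP A D]|.
  rewrite card_fset_sum1 -big_fset_condE big_mkcond /= /deg.
  apply: eq_big_seq => b hb; rewrite memPP //; by case: (D <= rr A (a / b))%N.
apply: fsubset_leq_card; apply/fsubsetP => b.
rewrite !inE => /andP[hb hP]; rewrite hb andTb.
have anz : a != 0 by apply: contraNneq h0 => <-.
have bnz : b != 0 by apply: contraNneq h0 => <-.
apply/imfsetP; exists (a / b) => //.
  by move: hP; rewrite /PP !inE.
by rewrite invf_div mulrCA (mulfV anz) mulr1.
Qed.

Local Close Scope fset_scope.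
Definition Hn (R : realType) (n : nat) : R := \sum_(1 <= k < n.+1) (k%:R)^-1.
Arguments Hn {R}.

Lemma Hn_ge1 {R : realType} n : (0 < n)%N -> 1 <= Hn (R:=R) n.
Proof.
move=> n0; rewrite /Hn big_ltn // invr1 lerDl; apply: sumr_ge0 => i _.
by rewrite invr_ge0.
Qed.

Lemma Hn_ln {R : realType} n : (0 < n)%N -> Hn (R:=R) n <= 1 + ln n%:R.
Proof.
elim: n => [//|n IH] _.
case: n IH => [|n] IH.
  by rewrite /Hn big_nat1 invr1 ln1 addr0.
have IH' := IH isT.
rewrite /Hn big_nat_recr //= -/(Hn n.+1).
have hl : ln (n.+1%:R : R) + (n.+2%:R)^-1 <= ln (n.+2%:R).
  have h1 := @le_ln1Dx R (- (n.+2%:R)^-1).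
  have hx : -1 < - (n.+2%:R : R)^-1.
    rewrite ltrN2 invf_lt1 ?ltr1n //.
  have := h1 hx.
  have -> : 1 - (n.+2%:R : R)^-1 = n.+1%:R / n.+2%:R.
    rewrite -[(n.+2)%:R]natr1; field.
    by apply: lt0r_neq0; have := ler0n R n; lra.
  rewrite ln_div ?posrE ?ltr0n //. 
  move=> h; move: h; rewrite lerBlDr => h; rewrite -lerBrDr; apply: le_trans h _; rewrite addrC lerD2l; exact: lexx.
apply: le_trans (lerD IH' (lexx _)) _; rewrite -addrA lerD2l; exact hl.
Qed.

Lemma pigeon {R : realType} (h : nat -> R) n : (0 < n)%N ->
  exists2 k, (1 <= k <= n)%N & \sum_(1 <= i < n.+1) h i <= Hn n * (k%:R * h k).
Proof.
move=> n0.
set S := \sum_(1 <= i < n.+1) h i.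
have H1 := @Hn_ge1 R n n0.
have Hp : 0 < Hn (R:=R) n by apply: lt_le_trans H1.
case: (pselect (exists2 k, (1 <= k <= n)%N & S <= Hn n * (k%:R * h k))) => // hno.
exfalso.
have hlt : forall i, (1 <= i < n.+1)%N -> h i < S / Hn n / i%:R.
  move=> i /andP[i1 i2].
  have ip : (0 : R) < i%:R by rewrite ltr0n.
  rewrite ltr_pdivlMr // ltr_pdivlMr //.
  have : ~ (S <= Hn n * (i%:R * h i)).
    by move=> hh; apply: hno; exists i => //; rewrite i1 -ltnS.
  move/negP; rewrite -ltNge => hh.
  have e : h i * i%:R * Hn n = Hn n * (i%:R * h i) by rewrite mulrC (mulrC (h i)).
  rewrite e; exact: hh.
have n1 : (1 < n.+1)%N by rewrite ltnS.
have := ltr_sum_nat n1 hlt.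
rewrite -/S -mulr_sumr -/(Hn n) divfK ?gt_eqF // ltxx //.
Qed.

Lemma dstar_le {R : realType} (A : {fset R}) t Q S :
  dstar_admissible A t Q S -> dstar A <= dstar_value A t Q S.
Proof.
move=> adm.
have hlb : has_lbound [set v : R | exists t Q S, dstar_admissible A t Q S /\ v = dstar_value A t Q S].
  exists 0 => v [t' [Q' [S' [[ht _ _ _ _] ->]]]].
  rewrite /dstar_value; apply: divr_ge0; first by apply: mulr_ge0; apply: exprn_ge0.
  by apply: mulr_ge0 => //; apply: exprn_ge0; apply: ltW.
apply: (ge_inf hlb); by exists t, Q, S.
Qed.

Lemma sq_le {R : realType} (x y : R) : 0 <= x -> x <= y -> x ^+ 2 <= y ^+ 2.
Proof. by move=> x0 xy; rewrite !expr2; apply: ler_pM. Qed.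

Lemma key_ineq {R : realType} (N K E W g f d D HM Hh : R) :
  0 < N -> 0 < K -> 1 <= D -> 1 <= d -> 0 <= g -> 0 < f -> 0 <= W ->
  0 <= HM -> 0 <= Hh ->
  N ^+ 3 / K <= E -> E <= HM * (D * W) -> D * g <= W -> W <= Hh * (d * f) -> d <= N ->
  N ^+ 5 * g ^+ 2 <= K ^+ 2 * (HM ^+ 2 * Hh ^+ 4) * (d ^+ 3 * f ^+ 4).
Proof.
move=> N0 K0 D1 d1 g0 f0 W0 HM0 Hh0 hE1 hE2 hg hW hd.
have s2 : N ^+ 3 <= K * E by move: hE1; rewrite ler_pdivrMr // mulrC.
have s1 : g * E <= HM * W ^+ 2.
  have h1 : g * E <= g * (HM * (D * W)) := ler_wpM2l g0 hE2.
  have h2 : HM * W * (D * g) <= HM * W * W := ler_wpM2l (mulr_ge0 HM0 W0) hg.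
  have e1 : g * (HM * (D * W)) = HM * W * (D * g) by ring.
  have e2 : HM * W ^+ 2 = HM * W * W by ring.
  by rewrite e2; apply: le_trans h1 _; rewrite e1.
have s3 : g * N ^+ 3 <= K * HM * W ^+ 2.
  have h1 : g * N ^+ 3 <= g * (K * E) := ler_wpM2l g0 s2.
  have h2 : K * (g * E) <= K * (HM * W ^+ 2) := ler_wpM2l (ltW K0) s1.
  have e1 : g * (K * E) = K * (g * E) by ring.
  have e2 : K * HM * W ^+ 2 = K * (HM * W ^+ 2) by ring.
  by rewrite e2; apply: le_trans h1 _; rewrite e1.
have dp : 0 <= d by lra.
have fp : 0 <= f by exact: ltW.
have s4 : W ^+ 2 <= Hh ^+ 2 * (d ^+ 2 * f ^+ 2).
  have -> : Hh ^+ 2 * (d ^+ 2 * f ^+ 2) = (Hh * (d * f)) ^+ 2 by ring.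
  exact: sq_le.
have s5 : g * N ^+ 3 <= K * HM * (Hh ^+ 2 * (d ^+ 2 * f ^+ 2)).
  apply: le_trans s3 _; apply: ler_wpM2l => //; apply: mulr_ge0 => //; exact: ltW.
have s6 : (g * N ^+ 3) ^+ 2 <= (K * HM * (Hh ^+ 2 * (d ^+ 2 * f ^+ 2))) ^+ 2.
  apply: sq_le => //; apply: mulr_ge0 => //.
  by apply: exprn_ge0; exact: ltW.
have s7 : d ^+ 4 <= N * d ^+ 3.
  rewrite exprS; apply: ler_wpM2r => //; apply: exprn_ge0; lra.
have s8 : N * (N ^+ 5 * g ^+ 2) <= N * (K ^+ 2 * (HM ^+ 2 * Hh ^+ 4) * (d ^+ 3 * f ^+ 4)).
  have -> : N * (N ^+ 5 * g ^+ 2) = (g * N ^+ 3) ^+ 2 by ring.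
  apply: le_trans s6 _.
  have -> : (K * HM * (Hh ^+ 2 * (d ^+ 2 * f ^+ 2))) ^+ 2 =
     K ^+ 2 * (HM ^+ 2 * Hh ^+ 4) * f ^+ 4 * d ^+ 4 by ring.
  have -> : N * (K ^+ 2 * (HM ^+ 2 * Hh ^+ 4) * (d ^+ 3 * f ^+ 4)) =
     K ^+ 2 * (HM ^+ 2 * Hh ^+ 4) * f ^+ 4 * (N * d ^+ 3) by ring.
  apply: ler_wpM2l => //.
  apply: mulr_ge0; last by apply: exprn_ge0; exact: ltW.
  apply: mulr_ge0; first by apply: exprn_ge0; exact: ltW.
  by apply: mulr_ge0; apply: exprn_ge0.
by rewrite ler_pM2l in s8.
Qed.

Lemma final_real {R : realType} (N K g f d L X : R) :
  0 < N -> 0 < K -> 0 < f -> 0 < d -> X <= 4 * L ^+ 6 ->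
  N ^+ 5 * g ^+ 2 <= K ^+ 2 * X * (d ^+ 3 * f ^+ 4) ->
  (N ^+ 2 * g ^+ 2) / (f * d ^+ 3) <=
    4 * ((K * f ^+ 2) / (N * (N ^+ 2 / (K * f)))) * L ^+ 6.
Proof.
move=> N0 K0 f0 d0 hX h.
have e : (K * f ^+ 2) / (N * (N ^+ 2 / (K * f))) = K ^+ 2 * f ^+ 3 / N ^+ 3.
  by field; rewrite ?gt_eqF.
rewrite e ler_pdivrMr; last by apply: mulr_gt0 => //; apply: exprn_gt0.
have -> : 4 * (K ^+ 2 * f ^+ 3 / N ^+ 3) * L ^+ 6 * (f * d ^+ 3) =
   (K ^+ 2 * (4 * L ^+ 6) * (d ^+ 3 * f ^+ 4)) / N ^+ 3.
  by field; rewrite ?gt_eqF.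
rewrite ler_pdivlMr; last by apply: exprn_gt0.
have -> : N ^+ 2 * g ^+ 2 * N ^+ 3 = N ^+ 5 * g ^+ 2 by ring.
apply: le_trans h _.
apply: ler_wpM2r; first by apply: mulr_ge0; apply: exprn_ge0; exact: ltW.
apply: ler_wpM2l => //; apply: exprn_ge0; exact: ltW.
Qed.

Lemma log_facts {R : realType} (n : nat) : (0 < n)%N ->
  let L := log2 (2 * (n%:R : R)) in
  [/\ 1 <= L, Hn (R:=R) n <= L & Hn (R:=R) (n * n)%N <= 2 * L].
Proof.
move=> n0 L.
have l2p : (0 : R) < ln 2 by apply: ln_gt0; rewrite ltr1n.
have l21 : ln (2 : R) <= 1.
  have h := @le_ln1Dx R 1 (ltac:(lra) : (-1:R) < 1).
  have e2 : (1 + 1 : R) = 2 by rewrite -[2]natr1.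
  by rewrite e2 in h.
have np : (0 : R) < n%:R by rewrite ltr0n.
have lnn : 0 <= ln (n%:R : R) by apply: ln_ge0; rewrite ler1n.
have eL : L = (ln 2 + ln (n%:R : R)) / ln 2.
  by rewrite /L /log2 lnM // posrE.
have hL : 1 + ln (n%:R : R) <= L.
  rewrite eL ler_pdivlMr //.
  have : ln (2:R) * ln (n%:R : R) <= 1 * ln (n%:R) by apply: ler_wpM2r.
  lra.
split.
- by apply: le_trans hL; lra.
- apply: le_trans _ hL; exact: Hn_ln.
- have mm : (0 < n * n)%N by rewrite muln_gt0 n0.
  apply: le_trans (@Hn_ln R _ mm) _.
  rewrite natrM lnM ?posrE //. lra.
Qed.

Lemma goal2_real {R : realType} (N K f : R) : 0 < N -> 0 < K -> 0 < f -> f <= N ->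
  N / K <= 4 * (N ^+ 2 / (K * f)).
Proof.
move=> N0 K0 f0 fN.
have e : N ^+ 2 / (K * f) = N / K * (N / f) by field; rewrite ?gt_eqF.
rewrite e.
have q : 1 <= N / f by rewrite ler_pdivlMr // mul1r.
have x0 : 0 <= N / K by apply: divr_ge0; apply: ltW.
set x := N / K in x0 *; set y := N / f in q *.
nra.
Qed.

Lemma goal3_real {R : realType} (N K f L : R) : 0 < N -> 0 < K -> 0 < f -> 1 <= L ->
  N ^+ 2 / (K * (N ^+ 2 / (K * f))) <= 4 * f * L ^+ 6.
Proof.
move=> N0 K0 f0 L1.
have e : N ^+ 2 / (K * (N ^+ 2 / (K * f))) = f by field; rewrite ?gt_eqF.
rewrite e.
have : 1 <= L ^+ 6 by apply: exprn_ege1.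
set z := L ^+ 6 => z1.
nra.
Qed.

Local Open Scope fset_scope.

Theorem lemma6p4 (R : realType) :
  exists (C : R) (c : nat), 0 < C /\ (0 < c)%N /\
  forall (A : {fset R}) (K : R),
    (0 : R) \notin A -> 0 < K ->
    (#|` A|)%:R ^+ 3 / K <= (mult_energy A)%:R ->
    let L := log2 (2 * (#|` A|)%:R) in
    exists (A' : {fset R}) (D : R),
      [/\ A' `<=` A,
          (#|` A|)%:R / K <= C * D,
          (#|` A|)%:R ^+ 2 / (K * D) <= C * (#|` A'|)%:R * L ^+ c &
          dstar A' <= C * ((K * (#|` A'|)%:R ^+ 2) / ((#|` A|)%:R * D)) * L ^+ c].
Proof.
exists 4, 6%N; split; first by rewrite ltr0n. split => //.
move=> A K h0 Kp hE L.
have [A0|Apos] := eqVneq #|` A| 0%N.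
  exists fset0, 0; split.
  - exact: fsub0set.
  - by rewrite A0 mul0r mulr0.
  - by rewrite A0 cardfs0 expr0n /= mulr0 invr0 !mulr0 !mul0r.
  - rewrite !mulr0 invr0 !mulr0 mul0r.
    have adm : dstar_admissible (fset0 : {fset R}) 1 [fset 1] [fset 1].
      split => //.
      + split; apply/eqP => h; have := fset11 (1 : R); rewrite h inE //.
      + by split; rewrite inE eq_sym oner_eq0.
    apply: le_trans (dstar_le _ _ _ _ adm) _.
    by rewrite /dstar_value cardfs0 mul0r invr0 mulr0.
have n0 : (0 < #|` A|)%N by rewrite lt0n.
have nn0 : (0 < #|` A| * #|` A|)%N by rewrite muln_gt0 n0.
have [D hD hED] := pigeon (fun D => (WW A D)%:R : R) _ nn0.
have Elay : (mult_energy A)%:R = \sum_(1 <= i < (#|` A| * #|` A|).+1) ((WW A i)%:R : R).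
  by rewrite energy_layer natr_sum.
rewrite -Elay in hED.
have [d hd hWd] := pigeon (fun d => (#|` AA A D d|)%:R : R) _ n0.
have Wlay : ((WW A D)%:R : R) = \sum_(1 <= i < #|` A|.+1) ((#|` AA A D i|)%:R : R).
  by rewrite WW_layer natr_sum.
rewrite -Wlay in hWd.
move: hD hd => /andP[D1 _] /andP[d1 dn].
have [L1 HnL HML] := log_facts (R:=R) _ n0.
have Np : (0 : R) < #|` A|%:R by rewrite ltr0n.
have Ep : (0 : R) < (mult_energy A)%:R.
  apply: lt_le_trans hE; apply: divr_gt0 => //; exact: exprn_gt0.
have HM0 : (0 : R) <= Hn (#|` A| * #|` A|)%N.
  by apply: le_trans (Hn_ge1 _ nn0).
have Hh0 : (0 : R) <= Hn #|` A|.
  by apply: le_trans (Hn_ge1 _ n0).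
have Wp : (0 : R) < (WW A D)%:R.
  rewrite lt0r ler0n andbT; apply/eqP => W0.
  move: hED; rewrite W0 !mulr0 => h; lra.
have fp : (0 : R) < (#|` AA A D d|)%:R.
  rewrite lt0r ler0n andbT; apply/eqP => f0.
  move: hWd; rewrite f0 !mulr0 => h; lra.
have Pne : PP A D != fset0.
  apply/eqP => P0; move: Wp; rewrite WW_eq P0 big_seq_fset0 ltxx //.
have adm : dstar_admissible (AA A D d) d%:R A (PP A D).
  split.
  - by rewrite ltr0n.
  - by split => //; apply/eqP => h; move: n0; rewrite h cardfs0.
  - split => //; apply/negP => h; have := PP_nz _ _ _ h0 h; by rewrite eqxx.
  - apply: leq_trans _ (leq_maxl _ _); apply: fsubset_leq_card; exact: fset_sub.
  - move=> a; rewrite /AA !inE => /andP[ha hda]; rewrite ler_nat.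
    exact: leq_trans hda (deg_le_cap _ _ _ h0 ha).
have hds := dstar_le _ _ _ _ adm.
have fN : ((#|` AA A D d|)%:R : R) <= #|` A|%:R.
  by rewrite ler_nat; apply: fsubset_leq_card; apply: fset_sub.
exists (AA A D d), (#|` A|%:R ^+ 2 / (K * #|` AA A D d|%:R)); split.
- exact: fset_sub.
- exact: goal2_real.
- by apply: goal3_real.
- apply: le_trans hds _; rewrite /dstar_value.
  apply: (@final_real R _ _ _ _ _ _ (Hn (#|` A| * #|` A|)%N ^+ 2 * Hn #|` A| ^+ 4)) => //.
  + by rewrite ltr0n.
  + have h1 : Hn (#|` A| * #|` A|)%N ^+ 2 <= (2 * L) ^+ 2 := sq_le _ _ HM0 HML.
    have h2 : Hn (R:=R) #|` A| ^+ 4 <= (L ^+ 2) ^+ 2.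
      have -> : Hn (R:=R) #|` A| ^+ 4 = (Hn (R:=R) #|` A| ^+ 2) ^+ 2 by rewrite -exprM.
      by apply: sq_le; [apply: exprn_ge0 | apply: sq_le].
    have -> : 4 * L ^+ 6 = (2 * L) ^+ 2 * (L ^+ 2) ^+ 2 by ring.
    by apply: ler_pM => //; apply: exprn_ge0.
  + apply: (@key_ineq R _ _ ((mult_energy A)%:R) ((WW A D)%:R) _ _ _ (D%:R)
      (Hn (#|` A| * #|` A|)%N) (Hn #|` A|)) => //.
    * by rewrite ler1n.
    * by rewrite ler1n.
    * rewrite -natrM ler_nat; exact: WW_ge.
    * by rewrite ler_nat.
Qed.
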